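(* If $H$ is a Vorob'ev regular hypergraph, then Graham's algorithm succeeds on $H$.
   Context: A hypergraph $H=(V,E)$ has a finite vertex set $V$ and a set $E$ of nonempty subsets of $V$ (hyperedges). Graham's algorithm: treating the hyperedges as a finite list, repeatedly apply the following operations until neither applies: (1) if a vertex $v$ belongs to exactly one hyperedge $X_i$, delete $v$ from $X_i$ (discarding $X_i$ if it becomes empty); (2) if two hyperedges with distinct indices satisfy $X_i\subseteq X_j$, delete $X_i$. Graham's algorithm succeeds on $H$ if the result has no hyperedges. Vorob'ev regularity: a complex is a hypergraph whose set of hyperedges is closed under taking subsets; the downward closure of $H$ is the complex whose hyperedges are all subsets of hyperedges of $H$. In a complex $\mathcal K$, a hyperedge is maximal if not a proper subset of another hyperedge. For distinct maximal hyperedges $X,Y$, $X$ yields a maximal intersection with $Y$ if there is no maximal hyperedge $Z\notin\{X,Y\}$ with $X\cap Y\subsetneq X\cap Z$. A maximal hyperedge $X$ is extreme if all maximal intersections of $X$ (i.e., the sets $X\cap Y$ over those $Y$ with which $X$ yields a maximal intersection) are equal. The proper vertices of an extreme $X$ are those belonging to no other maximal hyperedge; the normal subcomplex corresponding to $X$ consists of all hyperedges of $\mathcal K$ disjoint from the proper vertices of $X$. A normal series is a sequence $\mathcal K=\mathcal K_0\supset\mathcal K_1\supset\cdots\supset\mathcal K_r$ with each $\mathcal K_{\ell+1}$ a normal subcomplex of $\mathcal K_\ell$ ($0\le\ell<r$) and $\mathcal K_r$ having no extreme hyperedge. $\mathcal K$ is regular if it has a normal series whose last term is the complex without vertices. $H$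 is Vorob'ev regular if its downward closure is regular. *)

(* Defs.v *)
From mathcomp Require Import all_boot.
Set Implicit Arguments. Unset Strict Implicit. Unset Printing Implicit Defensive.

Section Hypergraphs.
Variable T : finType.

Inductive star {A : Type} (R : A -> A -> Prop) : A -> A -> Prop :=
| star_refl x : star R x x
| star_step x y z : R x y -> star R y z -> star R x z.

Definition hypergraph (E : {set {set T}}) : Prop := set0 \notin E.

Definition rem_at (s : seq {set T}) (i : nat) : seq {set T} :=
  take i s ++ drop i.+1 s.

Inductive graham_step : seq {set T} -> seq {set T} -> Prop :=
| graham_del_vertex (s : seq {set T}) (i : nat) (v : T) :
    i < size s -> v \in nth set0 s i ->
    count (fun X : {set T} => v \in X) s = 1 ->
    graham_step s
      (if nth set0 s i :\ v == set0 then rem_at s i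
       else set_nth set0 s i (nth set0 s i :\ v))
| graham_del_edge (s : seq {set T}) (i j : nat) :
    i < size s -> j < size s -> i != j ->
    nth set0 s i \subset nth set0 s j ->
    graham_step s (rem_at s i).

Definition graham_terminal (s : seq {set T}) : Prop :=
  forall t, ~ graham_step s t.

Definition graham_succeeds (E : {set {set T}}) : Prop :=
  forall s, star graham_step (enum E) s -> graham_terminal s -> s = [::].

Definition complex (K : {set {set T}}) : Prop :=
  set0 \notin K /\
  (forall X Y : {set T}, X \in K -> Y \subset X -> Y != set0 -> Y \in K).

Definition down_closure (E : {set {set T}}) : {set {set T}} :=
  [set Y : {set T} | (Y != set0) && [exists X : {set T}, (X \in E) && (Y \subset X)]].

Definition maximal_edge (K : {set {set T}}) (X : {set T}) : bool :=
  (X \in K) && [forall Y : {set T}, (Y \in K) ==> ~~ (X \proper Y)].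

Definition max_inter (K : {set {set T}}) (X Y : {set T}) : bool :=
  [&& maximal_edge K X, maximal_edge K Y, X != Y &
   [forall Z : {set T}, (maximal_edge K Z && (Z != X) && (Z != Y)) ==>
              ~~ ((X :&: Y) \proper (X :&: Z))]].

Definition extreme (K : {set {set T}}) (X : {set T}) : Prop :=
  maximal_edge K X /\
  (forall Y Y' : {set T}, max_inter K X Y -> max_inter K X Y' -> X :&: Y = X :&: Y').

Definition proper_vertices (K : {set {set T}}) (X : {set T}) : {set T} :=
  [set v in X | [forall Y : {set T}, (maximal_edge K Y && (Y != X)) ==> (v \notin Y)]].

Definition normal_subcomplex (K : {set {set T}}) (X : {set T})
  : {set {set T}} :=
  [set Y in K | [disjoint Y & proper_vertices K X]].

Definition normal_step (K K' : {set {set T}}) : Prop :=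
  exists X : {set T}, extreme K X /\ K' = normal_subcomplex K X /\ K' \proper K.

Definition regular (K : {set {set T}}) : Prop :=
  complex K /\ star normal_step K set0.

Definition vorobev_regular (E : {set {set T}}) : Prop :=
  regular (down_closure E).

End Hypergraphs.

(* Main.v *)
Require Import Defs.
From mathcomp Require Import all_boot zify.
Set Implicit Arguments. Unset Strict Implicit. Unset Printing Implicit Defensive.

Section Acyc.
Variable T : finType.
Implicit Types (M N K : {set {set T}}) (X Y Z A B : {set T}).

Definition ear X M := exists Y, ((Y == set0) || (Y \in M)) /\
  (forall Z, Z \in M -> X :&: Z \subset Y).

Inductive acyc : {set {set T}} -> Prop :=
| acyc0 : acyc set0
| acycU X M : X \notin M -> ear X M -> acyc M -> acyc (X |: M).

Lemma VD (v : T) M : acyc M -> acyc ([set Z :\ v | Z in M] :\ set0).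
Proof.
elim=> [|X {}M XnM [Y [HY HXY]] _ IH].
  have -> : [set Z :\ v | Z in set0] :\ set0 = set0 :> {set {set T}}.
    by apply/setP=> W; rewrite !inE; apply/negbTE/andP=> [[_ /imsetP[Z]]]; rewrite inE.
  exact: acyc0.
set N := [set Z :\ v | Z in M].
rewrite imsetU1 -/N.
case: (boolP ((X :\ v == set0) || (X :\ v \in N))) => H.
  have -> : (X :\ v |: N) :\ set0 = N :\ set0.
    apply/setP=> W; rewrite !inE; case: (eqVneq W (X :\ v)) => [->|] //=.
    by case/orP: H => [/eqP ->|->]; rewrite ?eqxx ?andbT.
  exact: IH.
move: H; rewrite negb_or => /andP[H1 H2].
have -> : (X :\ v |: N) :\ set0 = X :\ v |: (N :\ set0).
  apply/setP=> W; rewrite !inE; case: (eqVneq W (X :\ v)) => [->|] //=.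
  by rewrite H1.
apply: acycU => //.
- by rewrite inE negb_and H2 orbT.
- exists (Y :\ v); split.
    case/orP: HY => [/eqP ->|HY].
      by apply/orP; left; apply/eqP/setP=> w; rewrite !inE andbF.
    case: (eqVneq (Y :\ v) set0) => //= Hn.
    by rewrite !inE Hn /=; apply: imset_f.
  move=> W; rewrite inE => /andP[_ /imsetP[Z ZM ->]].
  apply/subsetP=> w; rewrite !inE => /andP[/andP[wv wX] /andP[_ wZ]].
  rewrite wv /=; apply: (subsetP (HXY Z ZM)); by rewrite inE wX.
Qed.


Lemma PV M A B : acyc M -> A \subset B ->
  (forall Z, Z \in M -> Z != A -> B :&: Z \subset A) ->
  (forall Z, Z \in M -> Z != A -> Z != B) ->
  acyc [set (if Z == A then B else Z) | Z in M].
Proof.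
move=> HM AB; elim: HM => [|X {}M XnM [Y [HY HXY]] _ IH] C1 C2.
  have -> : [set (if Z == A then B else Z) | Z in set0] = set0 :> {set {set T}}.
    by apply/setP=> W; rewrite !inE; apply/negbTE/imsetP=> [[Z]]; rewrite inE.
  exact: acyc0.
set h := fun Z => if Z == A then B else Z.
have inj : {in X |: M &, injective h}.
  move=> Z1 Z2 H1 H2; rewrite /h.
  case: (eqVneq Z1 A) => [->|n1]; case: (eqVneq Z2 A) => [->|n2] //.
  - by move=> E; move: (C2 Z2 H2 n2); rewrite E eqxx.
  - by move=> E; move: (C2 Z1 H1 n1); rewrite E eqxx.
have hsup : forall Z, Z \subset h Z.
  by move=> Z; rewrite /h; case: (eqVneq Z A) => [->|].
rewrite imsetU1.
apply: acycU.
- apply/imsetP=> [[Z ZM E]].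
  have : X = Z by apply: inj => //; rewrite !inE ?eqxx ?ZM ?orbT.
  by move=> EX; move: XnM; rewrite EX ZM.
- case/orP: HY => [/eqP Y0|YM].
    exists set0; split; first by rewrite eqxx.
    move=> W /imsetP[Z ZM ->].
    have ZX : Z != X by apply: contraNneq XnM => <-.
    rewrite -Y0.
    rewrite /h; case: (eqVneq X A) => [EXA|nXA]; case: (eqVneq Z A) => [EZA|nZA].
    + by move: ZX; rewrite EZA EXA eqxx.
    + apply/subsetP=> w; rewrite inE => /andP[wB wZ].
      have : w \in A by apply: (subsetP (C1 Z (setU1r _ ZM) nZA)); rewrite inE wB wZ.
      rewrite -EXA => wX; apply: (subsetP (HXY Z ZM)); by rewrite inE wX wZ.
    + apply/subsetP=> w; rewrite inE => /andP[wX wB].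
      have : w \in A by apply: (subsetP (C1 X (setU11 _ _) nXA)); rewrite inE wB wX.
      rewrite -EZA => wZ; apply: (subsetP (HXY Z ZM)); by rewrite inE wX wZ.
    + exact: HXY.
  exists (h Y); split; first by rewrite imset_f ?orbT.
  move=> W /imsetP[Z ZM ->].
  have ZX : Z != X by apply: contraNneq XnM => <-.
  apply: subset_trans (hsup Y).
  rewrite /h; case: (eqVneq X A) => [EXA|nXA]; case: (eqVneq Z A) => [EZA|nZA].
  + by move: ZX; rewrite EZA EXA eqxx.
  + apply/subsetP=> w; rewrite inE => /andP[wB wZ].
    have : w \in A by apply: (subsetP (C1 Z (setU1r _ ZM) nZA)); rewrite inE wB wZ.
    rewrite -EXA => wX; apply: (subsetP (HXY Z ZM)); by rewrite inE wX wZ.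
  + apply/subsetP=> w; rewrite inE => /andP[wX wB].
    have : w \in A by apply: (subsetP (C1 X (setU11 _ _) nXA)); rewrite inE wB wX.
    rewrite -EZA => wZ; apply: (subsetP (HXY Z ZM)); by rewrite inE wX wZ.
  + exact: HXY.
- apply: IH.
  + by move=> Z ZM; apply: C1; rewrite inE ZM orbT.
  + by move=> Z ZM; apply: C2; rewrite inE ZM orbT.
Qed.


Lemma SD M : acyc M -> forall A B, A \in M -> B \in M -> A \subset B -> A != B ->
  acyc (M :\ A).
Proof.
elim=> [|X {}M XnM [Y [HY HXY]] HM IH] A B; first by rewrite inE.
case: (eqVneq X A) => [<- _ _ _ _|nXA].
  have -> : (X |: M) :\ X = M.
    apply/setP=> W; rewrite !inE; case: (eqVneq W X) => [->|] //=.
    by rewrite (negbTE XnM).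
  exact: HM.
rewrite in_setU1 eq_sym (negbTE nXA) /= => AM BXM AB nAB.
have -> : (X |: M) :\ A = X |: (M :\ A).
  apply/setP=> W; rewrite !inE; case: (eqVneq W X) => [->|] //=.
  by rewrite nXA.
have XnMA : X \notin M :\ A by rewrite inE negb_and XnM orbT.
case: (eqVneq B X) => [EBX|nBX].
  have AX : A \subset X by rewrite -EBX.
  case: (boolP ((Y \in M) && (Y != A))) => [/andP[YM nYA]|H].
    have AY : A \subset Y.
      by apply: subset_trans (HXY A AM); rewrite subsetI AX subxx.
    apply: acycU => //; last by apply: (IH A Y) => //; rewrite eq_sym.
    exists Y; split; first by rewrite !inE nYA YM orbT.
    by move=> Z; rewrite inE => /andP[_ ZM]; apply: HXY.
  have HA : forall Z, Z \in M -> X :&: Z \subset A.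
    move=> Z ZM; apply: subset_trans (HXY Z ZM) _.
    move: H; rewrite negb_and negbK; case/orP: HY => [/eqP ->|->]; first by rewrite sub0set.
    by move=> /= /eqP ->.
  have := PV HM AX (fun Z ZM _ => HA Z ZM).
  have -> : [set (if Z == A then X else Z) | Z in M] = X |: (M :\ A).
    apply/setP=> W; rewrite !inE; apply/imsetP/idP.
      case=> Z ZM ->; case: (eqVneq Z A) => [_|nZA]; first by rewrite eqxx.
      by rewrite nZA ZM orbT.
    case/orP=> [/eqP ->|/andP[nWA WM]]; first by exists A; rewrite ?eqxx.
    by exists W => //; rewrite (negbTE nWA).
  apply.
  by move=> Z ZM _; apply: contraNneq XnM => <-.
have BM : B \in M by move: BXM; rewrite in_setU1 (negbTE nBX).
apply: acycU => //; last by apply: (IH A B).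
exists (if Y == A then B else Y); split.
  case: (eqVneq Y A) => [_|nYA]; first by apply/orP; right; rewrite !inE BM andbT eq_sym.
  by case/orP: HY => [->|YM] //; rewrite !inE nYA YM orbT.
move=> Z; rewrite inE => /andP[_ ZM]; apply: subset_trans (HXY Z ZM) _.
by case: (eqVneq Y A) => [->|].
Qed.


Definition inv (s : seq {set T}) := acyc [set x in s] /\ set0 \notin s.

Lemma acyc_eq M N : M = N -> acyc M -> acyc N.
Proof. by move=> ->. Qed.

Lemma op1_aux a X b (v : T) : v \in X ->
  count (fun Z : {set T} => v \in Z) (a ++ X :: b) = 1 -> inv (a ++ X :: b) ->
  inv (if X :\ v == set0 then a ++ b else a ++ X :\ v :: b).
Proof.
move=> vX; rewrite count_cat /= vX => Hc [Hac Hn].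
have ca : count (fun Z : {set T} => v \in Z) a = 0 by lia.
have cb : count (fun Z : {set T} => v \in Z) b = 0 by lia.
have nv : forall Z, Z \in a ++ b -> v \notin Z.
  have ha : ~~ has (fun Z : {set T} => v \in Z) a by rewrite has_count ca.
  have hb : ~~ has (fun Z : {set T} => v \in Z) b by rewrite has_count cb.
  move=> Z; rewrite mem_cat => /orP[] HZ.
    by move/hasPn: ha => /(_ Z HZ).
  by move/hasPn: hb => /(_ Z HZ).
have fix1 : forall Z, Z \in a ++ b -> Z :\ v = Z.
  move=> Z /nv nvZ; apply/setP=> w; rewrite !inE.
  by case: (eqVneq w v) => [->|]; rewrite ?(negbTE nvZ).
have nz : forall Z, Z \in a ++ b -> Z != set0.
  move=> Z HZ; apply: contraNneq Hn => <-; move: HZ; rewrite !mem_cat inE.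
  by case/orP=> ->; rewrite ?orbT.
set t := (if X :\ v == set0 then a ++ b else a ++ X :\ v :: b).
have memt : forall W, (W \in t) = (W \in a ++ b) || ((X :\ v != set0) && (W == X :\ v)).
  move=> W; rewrite /t; case: (eqVneq (X :\ v) set0) => [_|nX]; first by rewrite orbF.
  by rewrite !mem_cat inE /=; case: (W \in a); case: (W \in b); case: (W == _); rewrite ?orbT.
split.
  apply: acyc_eq (VD v Hac).
  apply/setP=> W; rewrite !inE memt; apply/idP/idP.
    case/andP=> nW /imsetP[Z]; rewrite inE mem_cat inE => HZ EW; subst W.
    case/or3P: HZ => [HZ|/eqP EZ|HZ].
    - by rewrite fix1 ?mem_cat ?HZ.
    - by subst Z; rewrite eqxx nW orbT.
    - by rewrite fix1 ?mem_cat ?HZ ?orbT.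
  case/orP=> [HW|/andP[nX /eqP ->]].
    rewrite nz //=; apply/imsetP; exists W; first by move: HW; rewrite inE !mem_cat inE; case/orP=> ->; rewrite ?orbT.
    by rewrite fix1.
  rewrite nX /=; apply/imsetP; exists X => //; by rewrite inE mem_cat inE eqxx orbT.
rewrite memt negb_or; apply/andP; split.
  by apply/negP => /nz; rewrite eqxx.
by apply/negP => /andP[/negP H /eqP E]; apply: H; rewrite -E.
Qed.


Lemma decomp (s : seq {set T}) i : i < size s ->
  s = take i s ++ nth set0 s i :: drop i.+1 s.
Proof. by move=> Hi; rewrite -drop_nth // cat_take_drop. Qed.

Lemma nth_rem (s : seq {set T}) i j : i < size s -> j < size s -> i != j ->
  nth set0 s j \in rem_at s i.
Proof.
move=> Hi Hj nij; rewrite /rem_at mem_cat.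
case: (ltngtP j i) => [lji|lij|eij]; last by rewrite eij eqxx in nij.
  rewrite -(nth_take set0 lji); apply/orP; left; apply: mem_nth.
  by rewrite size_takel // ltnW.
apply/orP; right.
have -> : nth set0 s j = nth set0 (drop i.+1 s) (j - i.+1) by rewrite nth_drop subnKC.
apply: mem_nth; rewrite size_drop; apply: ltn_sub2r => //; exact: leq_ltn_trans lij Hj.
Qed.

Lemma op2_aux a X b Y : Y \in a ++ b -> X \subset Y -> inv (a ++ X :: b) -> inv (a ++ b).
Proof.
move=> Yab XY [Hac Hn].
have sub : forall W, W \in a ++ b -> W \in a ++ X :: b.
  by move=> W; rewrite !mem_cat inE; case/orP=> ->; rewrite ?orbT.
split; last by apply: contra Hn; apply: sub.
have E : [set x in a ++ X :: b] = X |: [set x in a ++ b].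
  apply/setP=> W; rewrite !inE !mem_cat inE.
  by case: (W \in a); case: (W \in b); case: (W == X); rewrite ?orbT.
case: (boolP (X \in a ++ b)) => XI.
  apply: acyc_eq Hac; rewrite E; apply/setP=> W; rewrite !inE.
  by case: (eqVneq W X) => [->|]; rewrite ?XI.
have := SD Hac (A := X) (B := Y).
rewrite E !inE eqxx /= Yab orbT => /(_ isT isT XY).
have nXY : X != Y by apply: contraNneq XI => ->.
move=> /(_ nXY); apply: acyc_eq; apply/setP=> W; rewrite !inE.
by case: (eqVneq W X) => [->|]; rewrite ?(negbTE XI).
Qed.

Lemma step_inv s t : graham_step s t -> inv s -> inv t.
Proof.
case=> [{}s i v Hi vX Hc|{}s i j Hi Hj nij Hsub].
  rewrite set_nthE Hi /rem_at.
  move=> Hinv; apply: (op1_aux vX); by rewrite -decomp.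
move=> Hinv; rewrite /rem_at.
apply: (op2_aux (X := nth set0 s i) (Y := nth set0 s j)) => //.
  exact: nth_rem.
by rewrite -decomp.
Qed.


Lemma acyc_inv M : acyc M -> M != set0 ->
  exists X M', [/\ M = X |: M', X \notin M' & ear X M'].
Proof.
case=> [|X M' XnM He _]; first by rewrite eqxx.
by move=> _; exists X, M'.
Qed.

Lemma terminal_nil s : inv s -> graham_terminal s -> s = [::].
Proof.
move=> [Hac Hn] Ht.
case: (boolP (uniq s)) => Hu; last first.
  case/(uniqPn set0): Hu => i [j [lij ljs Eij]].
  exfalso; apply: (Ht (rem_at s i)); apply: (@graham_del_edge _ s i j).
  - exact: ltn_trans lij ljs.
  - exact: ljs.
  - by rewrite ltn_eqF.
  - by rewrite Eij subxx.
case: (eqVneq s [::]) => // sn; exfalso.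
have Mn : [set x in s] != set0.
  by case: s sn {Hac Hn Ht Hu} => [//|x s' _]; apply/set0Pn; exists x; rewrite inE mem_head.
case: (acyc_inv Hac Mn) => X [M' [ES XnM [Y [HY HXY]]]].
have memS : forall Z, (Z \in s) = (Z == X) || (Z \in M').
  by move=> Z; rewrite -in_setU1 -ES inE.
have Xs : X \in s by rewrite memS eqxx.
have Hi : index X s < size s by rewrite index_mem.
have EX : nth set0 s (index X s) = X by rewrite nth_index.
have X0 : X != set0 by apply: contraNneq Hn => <-.
case: (boolP [exists v, (v \in X) && [forall Z, (Z \in M') ==> (v \notin Z)]]).
  case/existsP => v /andP[vX /forallP H].
  apply: (Ht _ (@graham_del_vertex _ s (index X s) v Hi _ _)); first by rewrite EX.
  rewrite (@eq_in_count _ _ (pred1 X)); first by rewrite count_uniq_mem // Xs.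
  move=> Z; rewrite memS /= => /orP[/eqP ->|ZM]; first by rewrite vX eqxx.
  have -> : Z == X = false by apply/negbTE; apply: contraNneq XnM => <-.
  by apply/negbTE; move: (H Z); rewrite ZM.
rewrite negb_exists => /forallP H.
have XY : X \subset Y.
  apply/subsetP=> v vX; move: (H v); rewrite vX /= negb_forall => /existsP[Z].
  rewrite negb_imply negbK => /andP[ZM vZ].
  by apply: (subsetP (HXY Z ZM)); rewrite inE vX vZ.
case/orP: HY => [/eqP Y0|YM].
  by move: X0; rewrite -subset0 -Y0 XY.
have Ys : Y \in s by rewrite memS YM orbT.
apply: (Ht _ (@graham_del_edge _ s (index X s) (index Y s) Hi _ _ _)).
- by rewrite index_mem.
- apply/eqP=> E; have : nth set0 s (index X s) = nth set0 s (index Y s) by rewrite E.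
  by rewrite EX nth_index // => EXY; move: XnM; rewrite EXY YM.
- by rewrite EX nth_index.
Qed.


Definition Mx (K : {set {set T}}) : {set {set T}} := [set X | maximal_edge K X].

Lemma max_above K A : A \in K -> exists B, maximal_edge K B /\ A \subset B.
Proof.
move=> AK.
have P0 : (fun B : {set T} => (B \in K) && (A \subset B)) A by rewrite /= AK subxx.
case: (@arg_maxnP _ A (fun B : {set T} => (B \in K) && (A \subset B)) (fun B : {set T} => #|B|) P0) => B /andP[BK AB] Hmax.
exists B; split => //; rewrite /maximal_edge BK /=.
apply/forallP=> C; apply/implyP=> CK; apply/negP=> BC.
have := Hmax C; rewrite CK (subset_trans AB (proper_sub BC)) => /(_ isT).
by rewrite /geq /= leqNgt (proper_card BC).
Qed.

Lemma maxE K X : maximal_edge K X -> X \in K /\ forall Y, Y \in K -> ~~ (X \proper Y).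
Proof.
by case/andP=> XK /forallP H; split => // Y YK; move: (H Y); rewrite YK.
Qed.

Lemma to_max_inter K X Z : maximal_edge K X -> maximal_edge K Z -> Z != X ->
  exists W, max_inter K X W /\ X :&: Z \subset X :&: W.
Proof.
move=> mX mZ nZX.
pose Q := fun W : {set T} => [&& maximal_edge K W, W != X & X :&: Z \subset X :&: W].
have QZ : Q Z by rewrite /Q mZ nZX subxx.
case: (@arg_maxnP _ Z Q (fun W : {set T} => #|X :&: W|) QZ) => W /and3P[mW nWX ZW] Hmax.
exists W; split => //; rewrite /max_inter mX mW eq_sym nWX /=.
apply/forallP=> Z'; apply/implyP=> /andP[/andP[mZ' nZ'X] nZ'W]; apply/negP=> pr.
have QZ' : Q Z' by rewrite /Q mZ' nZ'X (subset_trans ZW (proper_sub pr)).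
by move: (Hmax Z' QZ'); rewrite /geq /= leqNgt (proper_card pr).
Qed.

Lemma extreme_Y0 K X Z0 : extreme K X -> maximal_edge K Z0 -> Z0 != X ->
  exists Y0, [/\ maximal_edge K Y0, Y0 != X &
    forall Z, maximal_edge K Z -> Z != X -> X :&: Z \subset Y0].
Proof.
move=> [mX ext] mZ0 nZ0.
case: (to_max_inter mX mZ0 nZ0) => Y0 [MI0 _].
have mY0 : maximal_edge K Y0 by case/and4P: MI0.
have nY0 : Y0 != X by case/and4P: MI0; rewrite eq_sym.
exists Y0; split => // Z mZ nZ.
case: (to_max_inter mX mZ nZ) => W [MIW ZW].
rewrite (ext _ _ MIW MI0) in ZW.
by apply: subset_trans ZW _; apply: subsetIr.
Qed.

Lemma normal_mx K (K' : {set {set T}}) : complex K -> normal_step K K' ->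
  complex K' /\ exists X, [/\ Mx K = X |: Mx K', X \notin Mx K' & ear X (Mx K')].
Proof.
move=> [K0 Kcl] [X [Hext [EK' prK]]].
have mX : maximal_edge K X by case: Hext.
set P := proper_vertices K X in EK'.
have K'E : forall Y, (Y \in K') = (Y \in K) && [disjoint Y & P].
  by move=> Y; rewrite EK' /normal_subcomplex inE.
have cK' : complex K'.
  split; first by rewrite K'E (negbTE K0).
  move=> Y Z; rewrite !K'E => /andP[YK dY] ZY Z0.
  by rewrite (Kcl Y Z YK ZY Z0) /=; apply: disjointWl dY.
split => //.
have PX : P \subset X by apply/subsetP=> v; rewrite inE => /andP[].
have P0 : P != set0.
  apply/negP=> /eqP P0; move: prK; rewrite properE => /andP[_ /negP]; apply.
  apply/subsetP=> Y YK; rewrite K'E YK /= P0; by rewrite -setI_eq0 setI0.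
have inP : forall v, v \in X -> v \notin P ->
    exists Y, [/\ maximal_edge K Y, Y != X & v \in Y].
  move=> v vX; rewrite inE vX /= negb_forall => /existsP[Y].
  by rewrite negb_imply negbK => /andP[/andP[mY nYX] vY]; exists Y.
have maxK' : forall W, maximal_edge K W -> W != X -> W \in K'.
  move=> W mW nWX; rewrite K'E (maxE mW).1 /=.
  rewrite -setI_eq0; apply/eqP/setP=> v; rewrite !inE.
  apply/negbTE/negP=> /andP[vW /andP[vX /forallP H]].
  by move: (H W); rewrite mW nWX vW.
have XnK' : X \notin K'.
  rewrite K'E negb_and -setI_eq0; apply/orP; right.
  by rewrite (setIidPr PX).
have EMx : Mx K' = Mx K :\ X.
  apply/setP=> W; rewrite !inE; apply/idP/idP.
    move=> mW'; have [WK' Hmax'] := maxE mW'.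
    have nWX : W != X by apply: contraNneq XnK' => <-.
    rewrite nWX /=; move: WK'; rewrite K'E => /andP[WK dW].
    rewrite /maximal_edge WK /=; apply/forallP=> C; apply/implyP=> CK.
    apply/negP=> WC.
    have [C' [mC' CC']] := max_above CK.
    have WC' : W \proper C' by apply: proper_sub_trans WC CC'.
    case: (eqVneq C' X) => [EC'|nC'X]; last first.
      by move: (Hmax' C' (maxK' _ mC' nC'X)); rewrite WC'.
    have W0 : W != set0 by apply: contraNneq K0 => <-.
    case/set0Pn: W0 => w wW.
    have wX : w \in X by rewrite -EC'; apply: (subsetP (proper_sub WC')).
    have wP : w \notin P.
      by apply/negP=> wP; move: dW; rewrite -setI_eq0 => /eqP/setP/(_ w); rewrite in_setI in_set0 wW wP.
    have [Y [mY nYX _]] := inP w wX wP.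
    have [Y0 [mY0 nY0X HY0]] := extreme_Y0 Hext mY nYX.
    have WY0 : W \subset Y0.
      apply/subsetP=> u uW.
      have uX : u \in X by rewrite -EC'; apply: (subsetP (proper_sub WC')).
      have uP : u \notin P.
        by apply/negP=> uP; move: dW; rewrite -setI_eq0 => /eqP/setP/(_ u); rewrite in_setI in_set0 uW uP.
      have [Z [mZ nZX uZ]] := inP u uX uP.
      by apply: (subsetP (HY0 Z mZ nZX)); rewrite inE uX uZ.
    have nWY0 : W != Y0.
      apply/eqP=> EW; move: (maxE mY0).2 => /(_ X (maxE mX).1).
      by rewrite -EW -EC' WC'.
    have : W \proper Y0 by rewrite properEneq nWY0 WY0.
    by move: (Hmax' Y0 (maxK' _ mY0 nY0X)) => /negP.
  case/andP=> nWX mW; have [WK Hmax] := maxE mW.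
  rewrite /maximal_edge (maxK' _ mW nWX) /=; apply/forallP=> C; apply/implyP=> CK'.
  by apply: Hmax; move: CK'; rewrite K'E => /andP[].
exists X; split.
- apply/setP=> W; rewrite EMx !inE; case: (eqVneq W X) => [->|] //=.
- by rewrite EMx !inE eqxx.
case: (boolP [exists Z, maximal_edge K Z && (Z != X)]).
  case/existsP=> Z0 /andP[mZ0 nZ0].
  have [Y0 [mY0 nY0X HY0]] := extreme_Y0 Hext mZ0 nZ0.
  exists Y0; split; first by rewrite EMx !inE nY0X mY0 orbT.
  by move=> Z; rewrite EMx !inE => /andP[nZX mZ]; apply: HY0.
rewrite negb_exists => /forallP H.
exists set0; split; first by rewrite eqxx.
by move=> Z; rewrite EMx !inE => /andP[nZX mZ]; move: (H Z); rewrite mZ nZX.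
Qed.


Lemma reg_acyc K K0 : star (@normal_step T) K K0 -> K0 = set0 -> complex K -> acyc (Mx K).
Proof.
elim=> [x -> _|x y z Hxy _ IH Ez cx].
  apply: acyc_eq acyc0; apply/setP=> W; rewrite !inE /maximal_edge inE.
  by [].
have [cy [X [EX XnM He]]] := normal_mx cx Hxy.
rewrite EX; apply: acycU => //; exact: IH.
Qed.

Lemma E_acyc E : hypergraph E -> acyc (Mx (down_closure E)) -> acyc E.
Proof.
move=> HE Hm.
set D := down_closure E in Hm.
have inD : forall Y, Y \in D = (Y != set0) && [exists X, (X \in E) && (Y \subset X)].
  by move=> Y; rewrite inE.
have MxE : Mx D \subset E.
  apply/subsetP=> X; rewrite inE => mX; have [XD Hmax] := maxE mX.
  move: XD; rewrite inD => /andP[X0 /existsP[A /andP[AE XA]]].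
  have AD : A \in D.
    rewrite inD; apply/andP; split; last by apply/existsP; exists A; rewrite AE subxx.
    by apply: contraNneq X0 => A0; rewrite -subset0 -A0.
  move: (Hmax A AD); rewrite properE XA /= negbK => AX.
  by have -> : X = A by apply/eqP; rewrite eqEsubset XA AX.
have above : forall A, A \in E -> exists B, B \in Mx D /\ A \subset B.
  move=> A AE.
  have AD : A \in D.
    rewrite inD; apply/andP; split; last by apply/existsP; exists A; rewrite AE subxx.
    by apply: contraNneq HE => <-.
  by have [B [mB AB]] := max_above AD; exists B; rewrite inE mB.
suff : forall n N, #|N :\: Mx D| <= n -> Mx D \subset N -> N \subset E -> acyc N.
  by move/(_ #|E| E); apply => //; apply: leq_trans (subset_leq_card (subsetDl _ _)) _.
elim=> [|n IH] N.
  rewrite leqn0 cards_eq0 setD_eq0 => H1 H2 _.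
  by have -> : N = Mx D by apply/eqP; rewrite eqEsubset H1 H2.
case: (boolP (N \subset Mx D)) => [H1 _ H2 _|].
  by have -> : N = Mx D by apply/eqP; rewrite eqEsubset H1 H2.
case/subsetPn=> A AN AnM Hc MN NE.
have -> : N = A |: (N :\ A).
  apply/setP=> W; rewrite !inE; case: (eqVneq W A) => [->|] //=.
have AE : A \in E by apply: (subsetP NE).
have [B [BM AB]] := above A AE.
apply: acycU.
- by rewrite !inE eqxx.
- exists B; split.
    apply/orP; right; rewrite !inE (subsetP MN _ BM) andbT.
    by apply: contraNneq AnM => <-.
  by move=> Z _; apply: subset_trans (subsetIl _ _) AB.
apply: IH.
- have : A \in N :\: Mx D by rewrite inE AnM AN.
  move=> AD; rewrite -ltnS; apply: leq_trans Hc.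
  have -> : (N :\ A) :\: Mx D = (N :\: Mx D) :\ A.
    by apply/setP=> W; rewrite !in_setD andbCA.
  by rewrite (cardsD1 A (N :\: Mx D)) AD.
- apply/subsetP=> W WM; rewrite !inE (subsetP MN _ WM) andbT.
  by apply: contraNneq AnM => <-.
- by apply: subset_trans (subsetDl _ _) NE.
Qed.

End Acyc.

Unset Implicit Arguments.

Theorem lemma17 (T : finType) (E : {set {set T}}) :
  hypergraph E -> vorobev_regular E -> graham_succeeds E.
Proof.
move=> HE [cD HD] s Hs Ht.
apply: terminal_nil Ht.
have Hinv : inv (enum E).
  split; last by rewrite mem_enum.
  apply: acyc_eq (E_acyc HE (reg_acyc HD erefl cD)).
  by apply/setP=> W; rewrite inE mem_enum.
elim: Hs Hinv => // x y z Hxy _ IH Hx.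
by apply: IH; apply: step_inv Hxy Hx.
Qed.
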